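(* Let $R$ be a ring, let $T$ be a transfinite tree and let $\overline{T}$ be a completion of $T$. If $X$ is an indecomposable injective object of the category $(\overline{T},R\text{-Mod})$ of cocontinuous representations of $\overline{T}$, then $X\cong e_*^v(E)$ for some vertex $v\in\overline{T}$ and some indecomposable injective left $R$-module $E$.
   Context: A transfinite tree is a partially ordered set $T$ such that: (i) $T$ satisfies the descending chain condition; (ii) for every $v\in T$ the set $\{w\in T: w\le v\}$ is totally ordered; (iii) $T$ has a least element. A tree $T$ is complete if every chain (totally ordered subset) of $T$ has a least upper bound in $T$. A completion of $T$ is a complete tree $\overline{T}\supseteq T$ such that $T$ is a subtree of $\overline T$ closed downward (if $v\in T$, $u\in\overline T$, $u\le v$ then $u\in T$) and every element of $\overline{T}$ is the least upper bound of a chain in $T$. A poset $P$ is regarded as a category with exactly one morphism $u\to v$ if $u\le v$ and none otherwise; a representation of $P$ is a functor $X:P\to R\text{-Mod}$ (left $R$-modules). It is cocontinuous if whenever $u=\sup\{v_\alpha:\alpha<\gamma\}$ for a chain $(v_\alpha)_{\alpha<\gamma}$, one has $X(u)=\varinjlim_{\alpha<\gamma}X(v_\alpha)$ via the structure maps. $(\overline{T},R\text{-Mod})$ denotes the category of cocontinuous representations with natural transformations as morphisms. For a vertex $v$ and a module $M$, $e_*^v(M)$ is the representation with $e_*^v(M)(w)=\prod_{\mathrm{Hom}(w,v)}M$, i.e. $M$ if $w\le v$ and $0$ otherwise, with identity maps $M\to M$ for $w_1\le w_2\le v$ and zero maps otherwise; $e_*^v$ is right adjoint to evaluation at $v$.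 *)

(* Defs.v *)
From HB Require Import structures.
From mathcomp Require Import all_boot all_order all_algebra.
From mathcomp Require Import boolp functions.
Set Implicit Arguments. Unset Strict Implicit. Unset Printing Implicit Defensive.
Import GRing.Theory.
Local Open Scope ring_scope.

Definition is_lin (R : pzRingType) (U W : lmodType R) (f : U -> W) : Prop :=
  forall (a : R) (x y : U), f (a *: x + y) = a *: f x + f y.

Definition trivial_mod (R : pzRingType) (M : lmodType R) : Prop :=
  forall x : M, x = 0.

Definition injective_module (R : pzRingType) (E : lmodType R) : Prop :=
  forall (A B : lmodType R) (f : A -> B) (g : A -> E),
    is_lin f -> injective f -> is_lin g ->
    exists h : B -> E, is_lin h /\ forall x, h (f x) = g x.

Definition mod_biproduct (R : pzRingType) (M M1 M2 : lmodType R) : Prop :=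
  exists (i1 : M1 -> M) (i2 : M2 -> M) (p1 : M -> M1) (p2 : M -> M2),
    [/\ is_lin i1, is_lin i2, is_lin p1 & is_lin p2] /\
    [/\ (forall x, p1 (i1 x) = x), (forall x, p2 (i2 x) = x),
        (forall x, p1 (i2 x) = 0), (forall x, p2 (i1 x) = 0)
      & (forall m, i1 (p1 m) + i2 (p2 m) = m)].

Definition indecomposable_module (R : pzRingType) (E : lmodType R) : Prop :=
  ~ trivial_mod E /\
  forall M1 M2 : lmodType R, mod_biproduct E M1 M2 -> trivial_mod M1 \/ trivial_mod M2.

Record poset_ax (V : Type) (le : V -> V -> Prop) : Prop := {
  po_refl : forall v, le v v;
  po_antisym : forall u v, le u v -> le v u -> u = v;
  po_trans : forall u v w, le u v -> le v w -> le u w }.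

Record is_tree (V : Type) (le : V -> V -> Prop) (P : V -> Prop) : Prop := {
  tree_dcc : ~ exists f : nat -> V,
      forall n, P (f n) /\ le (f n.+1) (f n) /\ f n.+1 <> f n;
  tree_down_total : forall v u w, P v -> P u -> P w -> le u v -> le w v ->
      le u w \/ le w u;
  tree_least : exists r, P r /\ forall v, P v -> le r v }.

Definition is_chain (V : Type) (le : V -> V -> Prop) (P C : V -> Prop) : Prop :=
  (forall v, C v -> P v) /\ forall u v, C u -> C v -> le u v \/ le v u.

Definition is_lub (V : Type) (le : V -> V -> Prop) (C : V -> Prop) (u : V) : Prop :=
  (forall v, C v -> le v u) /\ forall w, (forall v, C v -> le v w) -> le u w.

Definition is_complete (V : Type) (le : V -> V -> Prop) : Prop :=
  forall C, is_chain le (fun _ => True) C -> exists u, is_lub le C u.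

(* (V, le) is a completion of the tree T (a subset of V with the induced order) *)
Definition is_completion (V : Type) (le : V -> V -> Prop) (T : V -> Prop) : Prop :=
  [/\ poset_ax le, is_tree le T, is_tree le (fun _ => True) & is_complete le] /\
  (forall u v, T v -> le u v -> T u) /\
  (forall u, exists C, is_chain le T C /\ is_lub le C u).

Record rep (R : pzRingType) (V : Type) (le : V -> V -> Prop) := Rep {
  robj : V -> lmodType R;
  rmap : forall u v, le u v -> robj u -> robj v;
  rmap_lin : forall u v (p : le u v), is_lin (rmap p);
  rmap_id : forall u (p : le u u) x, rmap p x = x;
  rmap_comp : forall u v w (p : le u v) (q : le v w) (r : le u w) x,
      rmap r x = rmap q (rmap p x) }.

Arguments rmap {R V le} r {u v} : rename.
Arguments robj {R V le} r : rename.

Definition is_nat (R : pzRingType) (V : Type) (le : V -> V -> Prop)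
    (X Y : rep R le) (f : forall v, robj X v -> robj Y v) : Prop :=
  (forall v, is_lin (f v)) /\
  forall u v (p : le u v) x, f v (rmap X p x) = rmap Y p (f u x).

Definition is_colim_cocone (R : pzRingType) (V : Type) (le : V -> V -> Prop)
    (X : rep R le) (C : V -> Prop) (u : V) : Prop :=
  forall (M : lmodType R) (g : forall v, C v -> robj X v -> M),
    (forall v (Cv : C v), is_lin (g v Cv)) ->
    (forall v w (Cv : C v) (Cw : C w) (p : le v w) x, g w Cw (rmap X p x) = g v Cv x) ->
    exists h : robj X u -> M,
      [/\ is_lin h,
          (forall v (Cv : C v) (p : le v u) x, h (rmap X p x) = g v Cv x)
        & (forall h' : robj X u -> M, is_lin h' ->
             (forall v (Cv : C v) (p : le v u) x, h' (rmap X p x) = g v Cv x) ->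
             forall y, h' y = h y)].

Definition cocontinuous (R : pzRingType) (V : Type) (le : V -> V -> Prop)
    (X : rep R le) : Prop :=
  forall (C : V -> Prop) (u : V), is_chain le (fun _ => True) C ->
    (exists v, C v) -> is_lub le C u -> is_colim_cocone X C u.

Definition rep_mono (R : pzRingType) (V : Type) (le : V -> V -> Prop)
    (A B : rep R le) (f : forall v, robj A v -> robj B v) : Prop :=
  forall (Z : rep R le) (g h : forall v, robj Z v -> robj A v),
    cocontinuous Z -> is_nat g -> is_nat h ->
    (forall v z, f v (g v z) = f v (h v z)) -> forall v z, g v z = h v z.

Definition injective_obj (R : pzRingType) (V : Type) (le : V -> V -> Prop)
    (X : rep R le) : Prop :=
  forall (A B : rep R le) (f : forall v, robj A v -> robj B v)
         (g : forall v, robj A v -> robj X v),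
    cocontinuous A -> cocontinuous B -> is_nat f -> rep_mono f -> is_nat g ->
    exists h : forall v, robj B v -> robj X v,
      is_nat h /\ forall v x, h v (f v x) = g v x.

Definition zero_rep (R : pzRingType) (V : Type) (le : V -> V -> Prop)
    (X : rep R le) : Prop := forall v, trivial_mod (robj X v).

Definition rep_biproduct (R : pzRingType) (V : Type) (le : V -> V -> Prop)
    (X Y Z : rep R le) : Prop :=
  exists (i1 : forall v, robj Y v -> robj X v) (i2 : forall v, robj Z v -> robj X v)
         (p1 : forall v, robj X v -> robj Y v) (p2 : forall v, robj X v -> robj Z v),
    [/\ is_nat i1, is_nat i2, is_nat p1 & is_nat p2] /\
    [/\ (forall v x, p1 v (i1 v x) = x), (forall v x, p2 v (i2 v x) = x),
        (forall v x, p1 v (i2 v x) = 0), (forall v x, p2 v (i1 v x) = 0)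
      & (forall v m, i1 v (p1 v m) + i2 v (p2 v m) = m)].

Definition indecomposable_obj (R : pzRingType) (V : Type) (le : V -> V -> Prop)
    (X : rep R le) : Prop :=
  ~ zero_rep X /\
  forall Y Z : rep R le, cocontinuous Y -> cocontinuous Z ->
    rep_biproduct X Y Z -> zero_rep Y \/ zero_rep Z.

Definition rep_iso (R : pzRingType) (V : Type) (le : V -> V -> Prop)
    (X Y : rep R le) : Prop :=
  exists (f : forall v, robj X v -> robj Y v) (g : forall v, robj Y v -> robj X v),
    [/\ is_nat f, is_nat g, (forall v x, g v (f v x) = x) & (forall v y, f v (g v y) = y)].

(* ---------- e_*^v(M) : w |-> prod_{Hom(w,v)} M ---------- *)

Section EStar.
Variables (R : pzRingType) (V : Type) (le : V -> V -> Prop) (Hpo : poset_ax le).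
Variables (v : V) (M : lmodType R).

Definition estar_obj (w : V) : lmodType R := (le w v -> M) : lmodType R.

Definition estar_map (w1 w2 : V) (p : le w1 w2) : estar_obj w1 -> estar_obj w2 :=
  fun x q => x (po_trans Hpo p q).

Lemma estar_map_lin w1 w2 (p : le w1 w2) : is_lin (estar_map p).
Proof. by move=> a x y; apply/funext => q. Qed.

Lemma estar_map_id w (p : le w w) x : estar_map p x = x.
Proof. by apply/funext => q; rewrite /estar_map (Prop_irrelevance (po_trans Hpo p q) q). Qed.

Lemma estar_map_comp w1 w2 w3 (p : le w1 w2) (q : le w2 w3) (r : le w1 w3) x :
  estar_map r x = estar_map q (estar_map p x).
Proof.
apply/funext => s; rewrite /estar_map.
by rewrite (Prop_irrelevance (po_trans Hpo r s) (po_trans Hpo p (po_trans Hpo q s))).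
Qed.

Definition e_star : rep R le :=
  @Rep R V le estar_obj estar_map estar_map_lin estar_map_id estar_map_comp.

End EStar.

(* Main.v *)
Require Import Defs.
From HB Require Import structures.
From mathcomp Require Import all_boot all_order all_algebra.
From mathcomp Require Import boolp functions.
Set Implicit Arguments. Unset Strict Implicit. Unset Printing Implicit Defensive.
Import GRing.Theory.
Local Open Scope ring_scope.

Section LinFacts.
Variables (R : pzRingType) (U W : lmodType R) (f : U -> W) (hf : is_lin f).
Lemma lin0 : f 0 = 0.
Proof.
have := hf 1 0 0; rewrite scale1r addr0 scale1r => /(congr1 (fun z => z - f 0)).
by rewrite subrr addrK.
Qed.
Lemma linD x y : f (x + y) = f x + f y.
Proof. by have := hf 1 x y; rewrite !scale1r. Qed.
Lemma linZ a x : f (a *: x) = a *: f x.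
Proof. by have := hf a x 0; rewrite !addr0 lin0 addr0. Qed.
Lemma linN x : f (- x) = - f x.
Proof. by rewrite -scaleN1r linZ scaleN1r. Qed.
Lemma linB x y : f (x - y) = f x - f y.
Proof. by rewrite linD linN. Qed.
End LinFacts.

Lemma lin_comp (R : pzRingType) (U W Z : lmodType R) (f : U -> W) (g : W -> Z) :
  is_lin f -> is_lin g -> is_lin (fun x => g (f x)).
Proof. by move=> hf hg a x y; rewrite hf hg. Qed.

Lemma lin_zero (R : pzRingType) (U W : lmodType R) : is_lin (fun _ : U => (0 : W)).
Proof. by move=> a x y; rewrite scaler0 addr0. Qed.

Section FixT.
Variables (R : pzRingType) (M : lmodType R) (f : M -> M) (hf : is_lin f).
Definition fixT (_ : is_lin f) : Type := {x : M | f x == x}.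
HB.instance Definition _ := SubChoice.on (fixT hf).
Lemma fix_closed : subsemimod_closed (fun x : M => f x == x).
Proof.
split; [split|].
- by rewrite /in_mem /= (lin0 hf).
- by move=> x y; rewrite /in_mem /= => /eqP hx /eqP hy; rewrite (linD hf) hx hy.
- by move=> a x; rewrite /in_mem /= => /eqP hx; rewrite (linZ hf) hx.
Qed.
HB.instance Definition _ :=
  GRing.SubChoice_isSubLmodule.Build R M (fun x => f x == x) (fixT hf) fix_closed.
End FixT.

Lemma triv_fun (R : pzRingType) (P : Prop) (M : lmodType R) (y : P -> M) :
  ~ P -> y = 0.
Proof. by move=> nP; apply/funext => p; case: (nP p). Qed.

Lemma triv_funT (R : pzRingType) (P : Prop) (M : lmodType R) :
  ~ P -> trivial_mod ((P -> M) : lmodType R).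
Proof. by move=> nP y; apply: triv_fun. Qed.

Section Colim.
Variables (R : pzRingType) (V : Type) (le : V -> V -> Prop).

Lemma colim_retract (Z X : rep R le) (C : V -> Prop) (u : V)
  (i : forall w, robj Z w -> robj X w) (r : forall w, robj X w -> robj Z w) :
  (forall w, (C w \/ w = u) -> is_lin (i w)) ->
  (forall w, (C w \/ w = u) -> is_lin (r w)) ->
  (forall v w (p : le v w), (C v \/ v = u) -> (C w \/ w = u) ->
     forall z, i w (rmap Z p z) = rmap X p (i v z)) ->
  (forall v w (p : le v w), (C v \/ v = u) -> (C w \/ w = u) ->
     forall x, r w (rmap X p x) = rmap Z p (r v x)) ->
  (forall w, (C w \/ w = u) -> forall z, r w (i w z) = z) ->
  is_colim_cocone X C u -> is_colim_cocone Z C u.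
Proof.
move=> il rl inat rnat ri HX M g gl gc.
have Du : C u \/ u = u by right.
have [h [hl hc hu]] := HX M (fun v Cv x => g v Cv (r v x))
  (fun v Cv => lin_comp (rl v (or_introl Cv)) (gl v Cv))
  (fun v w Cv Cw p x => etrans (congr1 (g w Cw) (rnat v w p (or_introl Cv) (or_introl Cw) x))
                               (gc v w Cv Cw p (r v x))).
exists (fun z => h (i u z)); split.
- exact: lin_comp (il u Du) hl.
- move=> v Cv p z; have Dv : C v \/ v = u by left.
  by rewrite inat // hc ri.
- move=> h' h'l h'c y.
  have e : forall x, h' (r u x) = h x.
    apply: hu; first exact: lin_comp (rl u Du) h'l.
    move=> v Cv p x; have Dv : C v \/ v = u by left.
    by rewrite rnat // h'c.
  by rewrite -e ri.
Qed.

Lemma colim_zero (Z : rep R le) (C : V -> Prop) (u : V) :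
  trivial_mod (robj Z u) ->
  (forall c, C c -> exists c', C c' /\ exists p : le c c', trivial_mod (robj Z c')) ->
  is_colim_cocone Z C u.
Proof.
move=> tu fin M g gl gc; exists (fun _ => 0); split.
- exact: lin_zero.
- move=> v Cv p x; have [c' [Cc' [q tc']]] := fin v Cv.
  by rewrite -(gc v c' Cv Cc' q x) (tc' (rmap Z q x)) (lin0 (gl c' Cc')).
- move=> h' h'l _ y; by rewrite (tu y) (lin0 h'l).
Qed.

Lemma colim_final (Z : rep R le) (C : V -> Prop) (u c0 : V) :
  (forall a, le a a) ->
  (forall a b, C a -> C b -> le a b \/ le b a) ->
  (forall c, C c -> le c u) -> C c0 ->
  is_colim_cocone Z (fun c => C c /\ le c0 c) u -> is_colim_cocone Z C u.
Proof.
move=> refl tot ub Cc0 HZ M g gl gc.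
have [h [hl hc hu]] := HZ M (fun v Cv x => g v (proj1 Cv) x)
  (fun v Cv => gl v (proj1 Cv)) (fun v w Cv Cw p x => gc v w (proj1 Cv) (proj1 Cw) p x).
have hc' : forall v (Cv : C v) (p : le v u) x, h (rmap Z p x) = g v Cv x.
  move=> v Cv p x; case: (tot c0 v Cc0 Cv) => q.
  - by rewrite (hc v (conj Cv q) p x) (Prop_irrelevance (proj1 (conj Cv q)) Cv).
  - have q0 := ub c0 Cc0.
    have hc0 := hc c0 (conj Cc0 (refl c0)) q0.
    rewrite (Prop_irrelevance (proj1 (conj Cc0 (refl c0))) Cc0) in hc0.
    by rewrite -(gc v c0 Cv Cc0 q x) -hc0 -(rmap_comp q q0 p).
exists h; split => // h' h'l h'c; apply: hu => // v Cv p x.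

Qed.
End Colim.

Lemma piapp (P : Prop) (T : Type) (f : P -> T) a b : f a = f b.
Proof. by rewrite (Prop_irrelevance a b). Qed.

Section Tree.
Variables (R : pzRingType) (V : Type) (le : V -> V -> Prop) (Hpo : poset_ax le).

Let refl := po_refl Hpo.
Let trans := po_trans Hpo.
Let antis := po_antisym Hpo.

Lemma estar_cc v (M : lmodType R) : cocontinuous (e_star Hpo v M).
Proof.
move=> C u [_ Cch] [c0 Cc0] [ub lub].
case: (pselect (le u v)) => Huv.
- move=> M' g gl gc.
  exists (fun y => g c0 Cc0 (fun _ => y Huv)); split.
  + move=> a y y'; rewrite -gl; congr (g _ _ _).
  + move=> c Cc p x /=; case: (Cch c0 c Cc0 Cc) => q.
    * rewrite -(gc c0 c Cc0 Cc q); congr (g _ _ _); apply/funext => q' /=.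
      rewrite /estar_map /=; exact: piapp.
    * rewrite -(gc c c0 Cc Cc0 q); congr (g _ _ _); apply/funext => q' /=.
      rewrite /estar_map /=; exact: piapp.
  + move=> h' h'l h'c y.
    rewrite -(h'c c0 Cc0 (ub c0 Cc0)); congr (h' _); apply/funext => q /=.
    rewrite /estar_map /=; exact: piapp.
- apply: colim_zero; first exact: triv_funT.
  move=> c Cc.
  have [c1 [Cc1 nc1]] : exists c1, C c1 /\ ~ le c1 v.
    case: (pselect (exists c1, C c1 /\ ~ le c1 v)) => [//|H]; exfalso; apply: Huv.
    apply: lub => c' Cc'; case: (pselect (le c' v)) => // nc; case: H; by exists c'.
  case: (Cch c c1 Cc Cc1) => q.
  + exists c1; split=> //; exists q; exact: triv_funT.
  + exists c; split=> //; exists (refl c); apply: triv_funT => h; apply: nc1.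
    exact: trans q h.
Qed.

End Tree.

Section Reps.
Variables (R : pzRingType) (V : Type) (le : V -> V -> Prop) (Hpo : poset_ax le).
Let refl := po_refl Hpo.
Let trans := po_trans Hpo.
Let antis := po_antisym Hpo.
Variable tot : forall u v w, le u v -> le w v -> le u w \/ le w u.

Definition lt s w := le s w /\ s <> w.

Lemma cmp_lt a c s : le a c -> le s c -> le a s \/ lt s a.
Proof.
move=> ac sc; case: (tot ac sc) => h; [by left|].
case: (pselect (s = a)) => e; [by left; rewrite e; apply: refl | by right].
Qed.

Lemma rmap0 (X : rep R le) u v (p : le u v) : rmap X p 0 = 0.
Proof. exact: (lin0 (rmap_lin p)). Qed.

Section Uup.
Variables (X : rep R le) (s : V).
Definition uobj w : lmodType R := ((le s w -> robj X w) : lmodType R).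
Definition umap w w' (p : le w w') (a : uobj w) : uobj w' :=
  fun h' => match pselect (le s w) with left h => rmap X p (a h) | right _ => 0 end.
Lemma umap_lin w w' (p : le w w') : is_lin (umap p).
Proof.
move=> a x y; apply/funext => h' /=; rewrite /umap; case: pselect => h //.
  by rewrite (rmap_lin p).
by rewrite scaler0 addr0.
Qed.
Lemma umap_id w (p : le w w) x : umap p x = x.
Proof.
apply/funext => h'; rewrite /umap; case: pselect => h; last by case: (h h').
by rewrite rmap_id; exact: piapp.
Qed.
Lemma umap_comp w1 w2 w3 (p : le w1 w2) (q : le w2 w3) (r : le w1 w3) x :
  umap r x = umap q (umap p x).
Proof.
apply/funext => h3; rewrite /umap; case: (pselect (le s w1)) => h1.
  case: pselect => h2; first by rewrite (rmap_comp p q r).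
  by case: h2; exact: trans h1 p.
by case: pselect => // h2; rewrite rmap0.
Qed.
Definition Uup : rep R le := Rep umap_lin umap_id umap_comp.
End Uup.

Section Yrep.
Variables (X : rep R le) (s : V).
Definition yobj w : lmodType R :=
  (((le w s -> robj X s) * (lt s w -> robj X w))%type : lmodType R).
Definition ymap w w' (p : le w w') (y : yobj w) : yobj w' :=
  (fun q' => y.1 (trans p q'),
   fun h' => match pselect (lt s w) with
             | left h => rmap X p (y.2 h)
             | right _ => match pselect (le w s) with
                          | left q => rmap X (proj1 h') (y.1 q)
                          | right _ => 0 end end).
Lemma ymap_lin w w' (p : le w w') : is_lin (ymap p).
Proof.
move=> a x y; rewrite /ymap /=; congr (_, _); apply/funext => h' /=.
case: pselect => h; first by rewrite (rmap_lin p).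
case: pselect => q; first by rewrite (rmap_lin (proj1 h')).
by rewrite scaler0 addr0.
Qed.
Lemma ymap_id w (p : le w w) x : ymap p x = x.
Proof.
case: x => y z; rewrite /ymap /=; congr (_, _); apply/funext => h' /=.
  exact: piapp.
case: pselect => h; last by case: (h h').
by rewrite rmap_id; exact: piapp.
Qed.
Lemma ymap_comp w1 w2 w3 (p : le w1 w2) (q : le w2 w3) (r : le w1 w3) x :
  ymap r x = ymap q (ymap p x).
Proof.
case: x => y z; rewrite /ymap /=; congr (_, _); apply/funext => h3 /=.
  exact: piapp.
case: (pselect (lt s w1)) => h1.
  case: pselect => h2; first by rewrite (rmap_comp p q r).
  case: h2; split; first exact: trans (proj1 h1) p.
  move=> e; subst w2; apply: (proj2 h1); exact: antis (proj1 h1) p.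
case: (pselect (le w1 s)) => q1.
  case: pselect => h2; first by rewrite -(rmap_comp (proj1 h2) q (proj1 h3)).
  case: pselect => q2; first by congr (rmap X _ _); exact: piapp.
  by case: (cmp_lt q (proj1 h3)).
by case: (cmp_lt r (proj1 h3)).
Qed.
Definition Yrep : rep R le := Rep ymap_lin ymap_id ymap_comp.
End Yrep.
End Reps.

Section CC.
Variables (R : pzRingType) (V : Type) (le : V -> V -> Prop) (Hpo : poset_ax le).
Let refl := po_refl Hpo.
Let trans := po_trans Hpo.
Let antis := po_antisym Hpo.
Variable tot : forall u v w, le u v -> le w v -> le u w \/ le w u.

Lemma pairD1 (A B : lmodType R) (x y : (A * B)%type) : (x + y).1 = x.1 + y.1. Proof. by []. Qed.
Lemma pairD2 (A B : lmodType R) (x y : (A * B)%type) : (x + y).2 = x.2 + y.2. Proof. by []. Qed.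
Lemma pairZ1 (A B : lmodType R) a (x : (A * B)%type) : (a *: x).1 = a *: x.1. Proof. by []. Qed.
Lemma pairZ2 (A B : lmodType R) a (x : (A * B)%type) : (a *: x).2 = a *: x.2. Proof. by []. Qed.

Definition nonlim (s : V) := forall D, is_chain le (fun _ => True) D ->
  (exists e, D e) -> is_lub le D s -> D s.

Lemma final_chain (C : V -> Prop) c1 :
  is_chain le (fun _ => True) C -> C c1 -> is_lub le C c1 \/ True ->
  is_chain le (fun _ => True) (fun c => C c /\ le c1 c).
Proof. by move=> [_ Cch] _ _; split=> // a b [Ca _] [Cb _]; exact: Cch. Qed.

Lemma final_lub (C : V -> Prop) c1 u :
  is_chain le (fun _ => True) C -> C c1 -> is_lub le C u ->
  is_lub le (fun c => C c /\ le c1 c) u.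
Proof.
move=> [_ Cch] Cc1 [ub lub]; split; first by move=> v [Cv _]; exact: ub.
move=> b hb; apply: lub => c Cc; case: (Cch c1 c Cc1 Cc) => q.
  exact: hb.
exact: trans q (hb c1 (conj Cc1 (refl c1))).
Qed.

Lemma colim_final_X (X : rep R le) (C : V -> Prop) c1 u :
  cocontinuous X -> is_chain le (fun _ => True) C -> C c1 -> is_lub le C u ->
  is_colim_cocone X (fun c => C c /\ le c1 c) u.
Proof.
move=> Xcc Cch Cc1 Cl; apply: Xcc.
- exact: final_chain (or_intror I).
- by exists c1; split=> //; apply: refl.
- exact: final_lub.
Qed.

Lemma ytriv (X : rep R le) s w : ~ le w s -> ~ lt le s w -> trivial_mod (yobj X s w).
Proof.
move=> n1 n2 [y z]; rewrite (triv_fun y n1) (triv_fun z n2); by [].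
Qed.

Lemma Yrep_cc (X : rep R le) s : cocontinuous X -> cocontinuous (Yrep Hpo tot X s).
Proof.
move=> Xcc C u Cc [c0 Cc0] [ub lub].
have Cch := proj2 Cc.
have ex1 : ~ le u s -> exists c1, C c1 /\ ~ le c1 s.
  move=> nus; case: (pselect (exists c1, C c1 /\ ~ le c1 s)) => [//|H]; exfalso; apply: nus.
  apply: lub => c' Cc'; case: (pselect (le c' s)) => // nc; case: H; by exists c'.
case: (pselect (le u s)) => us.
-
  have Dle : forall w, C w \/ w = u -> le w s.
    by move=> w [Cw|->] //; exact: trans (ub w Cw) us.
  refine (@colim_retract _ _ _ (Yrep Hpo tot X s) (e_star Hpo s (robj X s)) C u
            (fun w (y : yobj X s w) => y.1)
            (fun w (e : le w s -> robj X s) => (e, 0 : lt le s w -> robj X w) : yobj X s w) _ _ _ _ _ _).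
  + by move=> w _ a x y.
  + move=> w _ a x y /=; congr (_, _); rewrite -[RHS]/(a *: (0 : lt le s w -> robj X w) + 0); by rewrite scaler0 addr0.
  + by move=> v w p _ _ z.
  + move=> v w p Dv Dw x /=; congr (_, _); apply/funext => h' /=.
    exfalso; apply: (proj2 h'); exact: antis (proj1 h') (Dle w Dw).
  + move=> w Dw [y z] /=; congr (_, _); apply/esym/triv_fun => h'.
    apply: (proj2 h'); exact: antis (proj1 h') (Dle w Dw).
  + refine (@estar_cc _ _ _ Hpo s (robj X s) C u Cc _ (conj ub lub)); by exists c0.
case: (pselect (le s u)) => su.
- have [c1 [Cc1 nc1]] := ex1 us.
  have ltc1 : lt le s c1.
    by case: (cmp_lt Hpo tot (ub c1 Cc1) su).
  apply: (colim_final refl Cch ub Cc1).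
  have Dlt : forall w, (C w /\ le c1 w) \/ w = u -> lt le s w.
    move=> w [[Cw c1w]|->].
    + split; first exact: trans (proj1 ltc1) c1w.
      by move=> e; subst w; apply: nc1.
    + split=> // e; subst u; by apply: us; apply: refl.
  refine (@colim_retract _ _ _ (Yrep Hpo tot X s) X _ u
            (fun w (y : yobj X s w) => match pselect (lt le s w) with left h => y.2 h | right _ => 0 end)
            (fun w (x : robj X w) => (0 : le w s -> robj X s, fun _ => x) : yobj X s w) _ _ _ _ _ _).
  + move=> w _ a x y /=; by case: pselect => // _; rewrite scaler0 addr0.
  + move=> w _ a x y /=; congr (_, _); rewrite -[RHS]/(a *: (0 : le w s -> robj X s) + 0); by rewrite scaler0 addr0.
  + move=> v w p Dv Dw [y z] /=; case: pselect => hw; last by case: (hw (Dlt w Dw)).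
    case: pselect => hv; last by case: (hv (Dlt v Dv)).
    by congr (rmap X _ _); exact: piapp.
  + move=> v w p Dv Dw x /=; congr (_, _); apply/funext => h' /=.
    case: pselect => hv; last by case: (hv (Dlt v Dv)).
    by [].
  + move=> w Dw [y z] /=; congr (_, _).
    * apply/esym/triv_fun => q; apply: (proj2 (Dlt w Dw)); exact: antis (proj1 (Dlt w Dw)) q.
    * apply/funext => h' /=; case: pselect => h; last by case: (h h').
      exact: piapp.
  + exact: colim_final_X.
- apply: colim_zero; first by apply: ytriv => // h; apply: su; exact: proj1 h.
  move=> c Hc; have [c1 [Cc1 nc1]] := ex1 us.
  have key : forall c', C c' -> le c1 c' -> trivial_mod (yobj X s c').
    move=> c' Cc' c1c'; apply: ytriv.
    + by move=> h; apply: nc1; exact: trans c1c' h.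
    + by move=> h; apply: su; exact: trans (proj1 h) (ub c' Cc').
  case: (Cch c c1 Hc Cc1) => q.
  + by exists c1; split=> //; exists q; apply: key => //; apply: refl.
  + by exists c; split=> //; exists (refl c); apply: key.
Qed.

Lemma Uup_cc (X : rep R le) s : cocontinuous X -> nonlim s -> cocontinuous (Uup Hpo X s).
Proof.
move=> Xcc nl C u Cc [c0 Cc0] [ub lub].
have Cch := proj2 Cc.
case: (pselect (le s u)) => su.
- have [c1 [Cc1 sc1]] : exists c1, C c1 /\ le s c1.
    case: (pselect (exists c1, C c1 /\ le s c1)) => [//|H]; exfalso.
    have allle : forall c, C c -> le c s.
      move=> c Cc1; case: (tot (ub c Cc1) su) => // h; case: H; by exists c.
    have us : u = s by apply: antis (lub s allle) su.
    subst u; case: H; exists s; split; last exact: refl.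
    by apply: nl => //; exists c0.
  apply: (colim_final refl Cch ub Cc1).
  have Dle : forall w, (C w /\ le c1 w) \/ w = u -> le s w.
    by move=> w [[Cw c1w]|->] //; exact: trans sc1 c1w.
  refine (@colim_retract _ _ _ (Uup Hpo X s) X _ u
            (fun w (a : uobj X s w) => match pselect (le s w) with left h => a h | right _ => 0 end)
            (fun w (x : robj X w) => (fun _ => x) : uobj X s w) _ _ _ _ _ _).
  + move=> w _ a x y /=; by case: pselect => // _; rewrite scaler0 addr0.
  + by move=> w _ a x y.
  + move=> v w p Dv Dw a /=; rewrite /umap; case: pselect => hw; last by case: (hw (Dle w Dw)).
    case: pselect => hv; last by case: (hv (Dle v Dv)).
    by [].
  + move=> v w p Dv Dw x /=; apply/funext => h' /=; rewrite /umap.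
    case: pselect => hv; last by case: (hv (Dle v Dv)).
    by [].
  + move=> w Dw a /=; apply/funext => h' /=; case: pselect => h; last by case: (h h').
    exact: piapp.
  + exact: colim_final_X.
- apply: colim_zero; first exact: triv_funT.
  move=> c Hc; exists c; split=> //; exists (refl c); apply: triv_funT => h.
  by apply: su; exact: trans h (ub c Hc).
Qed.

Section Krep.
Unset Implicit Arguments.
Variables (X : rep R le) (f : forall w, robj X w -> robj X w) (fl : forall w, is_lin (f w)).
Hypothesis fnat : forall v w (p : le v w) x, f w (rmap X p x) = rmap X p (f v x).
Hypothesis fidem : forall w x, f w (f w x) = f w x.
Set Implicit Arguments.
Definition kobj w : lmodType R := (fixT (fl w) : lmodType R).
Lemma kmap_subproof v w (p : le v w) (k : kobj v) : f w (rmap X p (val k)) == rmap X p (val k).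
Proof. by rewrite fnat (eqP (valP k)). Qed.
Definition kmap v w (p : le v w) (k : kobj v) : kobj w :=
  exist (fun x => f w x == x) (rmap X p (val k)) (kmap_subproof p k).
Lemma kmap_lin v w (p : le v w) : is_lin (kmap p).
Proof. move=> a x y; apply: val_inj => /=; exact: (rmap_lin p). Qed.
Lemma kmap_id v (p : le v v) x : kmap p x = x.
Proof. apply: val_inj => /=; exact: rmap_id. Qed.
Lemma kmap_comp w1 w2 w3 (p : le w1 w2) (q : le w2 w3) (r : le w1 w3) x :
  kmap r x = kmap q (kmap p x).
Proof. apply: val_inj => /=; exact: rmap_comp. Qed.
Definition Krep : rep R le := Rep kmap_lin kmap_id kmap_comp.
Lemma kr_subproof w (x : robj X w) : f w (f w x) == f w x.
Proof. by rewrite fidem. Qed.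
Definition kr w (x : robj X w) : kobj w := exist (fun x => f w x == x) (f w x) (kr_subproof x).
Lemma Krep_cc : cocontinuous X -> cocontinuous Krep.
Proof.
move=> Xcc C u Cc Cne Cl.
refine (@colim_retract _ _ _ Krep X C u (fun w k => val k) kr _ _ _ _ _ _).
- by move=> w _ a x y.
- by move=> w _ a x y; apply: val_inj => /=; exact: fl.
- by move=> v w p _ _ z.
- by move=> v w p _ _ x; apply: val_inj => /=; exact: fnat.
- by move=> w _ z; apply: val_inj => /=; exact: (eqP (valP z)).
- exact: Xcc.
Qed.
End Krep.
End CC.

Section Split.
Variables (R : pzRingType) (V : Type) (le : V -> V -> Prop) (Hpo : poset_ax le).
Let refl := po_refl Hpo.
Let trans := po_trans Hpo.
Let antis := po_antisym Hpo.
Variable tot : forall u v w, le u v -> le w v -> le u w \/ le w u.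
Variables (X : rep R le) (Xcc : cocontinuous X) (Xinj : injective_obj X)
  (Xind : indecomposable_obj X) (s : V) (nl : nonlim le s).

Let Y := Yrep Hpo tot X s.
Let U := Uup Hpo X s.

Lemma yext w (y y' : yobj X s w) : y.1 = y'.1 -> y.2 = y'.2 -> y = y'.
Proof. by case: y => a b; case: y' => a' b' /= -> ->. Qed.

Definition piY w (x : robj X w) : yobj X s w :=
  (fun q : le w s => rmap X q x, fun _ : lt le s w => x).

Lemma piY_nat : is_nat (X := X) (Y := Y) piY.
Proof.
split.
- move=> w a x y; apply: yext => /=; apply/funext => q /=; last by [].
  exact: (rmap_lin q).
- move=> v w p x; apply: yext => /=; apply/funext => h' /=.
    apply/esym; exact: rmap_comp.
  case: pselect => h //.
  case: pselect => q; first exact: rmap_comp.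
  by case: (cmp_lt Hpo tot p (proj1 h')).
Qed.

Definition jU w (a : uobj X s w) : yobj X s w :=
  (fun q => match pselect (le s w) with left h => rmap X q (a h) | right _ => 0 end,
   fun h' => a (proj1 h')).

Definition gU w (a : uobj X s w) : robj X w :=
  match pselect (le s w) with left h => a h | right _ => 0 end.

Lemma jU_nat : is_nat (X := U) (Y := Y) jU.
Proof.
split.
- move=> w a x y; apply: yext => /=; apply/funext => q /=.
    case: pselect => h; first exact: (rmap_lin q).
    by rewrite scaler0 addr0.
  by [].
- move=> v w p a; apply: yext => /=; apply/funext => q' /=.
    rewrite /umap; case: (pselect (le s v)) => hv.
      case: pselect => hw; first by rewrite -(rmap_comp p q' (trans p q')).
      by case: hw; exact: trans hv p.
    by case: pselect => hw //; rewrite rmap0.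
  rewrite /umap; case: (pselect (le s v)) => hv.
    case: pselect => h; first by congr (rmap X _ _); exact: piapp.
    case: pselect => q; first by rewrite -(rmap_comp q (proj1 q') p).
    case: (pselect (s = v)) => e; first by case: q; rewrite -e; apply: refl.
    by case: h.
  case: pselect => lv.
    by case: hv; exact: proj1 lv.
  by case: pselect => q //; rewrite rmap0.
Qed.

Lemma gU_nat : is_nat (X := U) (Y := X) gU.
Proof.
split.
- move=> w a x y; rewrite /gU; case: pselect => h //.
  by rewrite scaler0 addr0.
- move=> v w p a; rewrite /gU /=; rewrite /umap.
  case: (pselect (le s v)) => hv.
    by case: pselect => hw //; case: hw; exact: trans hv p.
  by rewrite rmap0; case: pselect.
Qed.

Lemma jU_inj w (a a' : uobj X s w) : jU a = jU a' -> a = a'.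
Proof.
move=> e; apply/funext => h.
case: (pselect (s = w)) => esw.
  subst w; have q := refl s.
  have := congr1 (fun F => F.1 q) e; rewrite /jU /=.
  case: pselect => h0; last by case: (h0 h).
  rewrite !rmap_id => e'; rewrite (Prop_irrelevance h h0); exact: e'.
have := congr1 (fun F => F.2 (conj h esw)) e; rewrite /jU /= => e'.
by rewrite (piapp a h (proj1 (conj h esw))) (piapp a' h (proj1 (conj h esw))).
Qed.

Lemma jU_mono : rep_mono (A := U) (B := Y) jU.
Proof. move=> Z g h _ _ _ e v z; apply: jU_inj; exact: e. Qed.

Lemma sigma_ex : exists sigma : forall w, yobj X s w -> robj X w,
  is_nat (X := Y) (Y := X) sigma /\ forall v x, sigma v (jU x) = gU x.
Proof.
apply: (Xinj (A := U) (B := Y)).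
- exact: Uup_cc.
- exact: Yrep_cc.
- exact: jU_nat.
- exact: jU_mono.
- exact: gU_nat.
Qed.

Section WithSigma.
Unset Implicit Arguments.
Variables (sigma : forall w, yobj X s w -> robj X w).
Hypotheses (sn : is_nat (X := Y) (Y := X) sigma) (sj : forall v x, sigma v (jU x) = gU x).
Set Implicit Arguments.

Lemma pisig w y : piY (sigma w y) = y.
Proof.
case: (pselect (lt le s w)) => h.
- have ns : ~ le w s by move=> q; apply: (proj2 h); exact: antis (proj1 h) q.
  pose a : uobj X s w := fun hs => y.2 (conj hs (proj2 h)).
  have ya : y = jU a.
    apply: yext; first by rewrite (triv_fun y.1 ns) (triv_fun (jU a).1 ns).
    apply/funext => h' /=; exact: piapp.
  rewrite ya sj /gU; case: pselect => hs; last by case: hs; exact: proj1 h.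
  apply: yext; first by rewrite (triv_fun (piY (a hs)).1 ns) (triv_fun (jU a).1 ns).
  apply/funext => h' /=; exact: piapp.
case: (pselect (le w s)) => q.
- apply: yext => /=; last first.
    by rewrite (triv_fun y.2 h); apply: triv_fun.
  apply/funext => q' /=; rewrite -(proj2 sn w s q' y).
  have -> : rmap Y q' y = jU (fun _ : le s s => y.1 q').
    apply: yext => /=.
      apply/funext => q'' /=; case: pselect => h0; last by case: h0; apply: refl.
      by rewrite rmap_id; exact: piapp.
    apply/funext => h'; exfalso; exact: (proj2 h').
  rewrite sj /gU; case: pselect => // h0; by case: h0; apply: refl.
- by rewrite (ytriv q h (piY _)) (ytriv q h y).
Qed.

Definition fK w (x : robj X w) := x - sigma w (piY x).

Lemma sig_lin w : is_lin (sigma w). Proof. exact: (proj1 sn). Qed.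
Lemma pi_lin w : is_lin (@piY w). Proof. exact: (proj1 piY_nat). Qed.

Lemma fK_lin w : is_lin (@fK w).
Proof.
move=> a x y; rewrite /fK (@pi_lin w) (@sig_lin w).
by rewrite scalerBr opprD addrACA.
Qed.

Lemma fK_nat v w (p : le v w) x : fK (rmap X p x) = rmap X p (fK x).
Proof.
rewrite /fK (linB (rmap_lin p)) (proj2 piY_nat) (proj2 sn); by [].
Qed.

Lemma pi_fK w x : piY (@fK w x) = 0.
Proof. by rewrite /fK (linB (@pi_lin w)) pisig subrr. Qed.

Lemma fK_idem w x : fK (@fK w x) = fK x.
Proof. by rewrite {1}/fK pi_fK (lin0 (@sig_lin w)) subr0. Qed.

Let K := Krep fK_lin fK_nat.

Lemma bip : rep_biproduct X Y K.
Proof.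
exists sigma, (fun w (k : kobj fK_lin w) => val k), piY, (kr fK_lin fK_idem).
split; split.
- exact: sn.
- by split => // v w p k.
- exact: piY_nat.
- split; first by move=> w a x y; apply: val_inj => /=; exact: fK_lin.
  by move=> v w p x; apply: val_inj => /=; exact: fK_nat.
- exact: pisig.
- by move=> w k; apply: val_inj => /=; exact: (eqP (valP k)).
- by move=> w k /=; rewrite -(eqP (valP k)) pi_fK.
- by move=> w y; apply: val_inj => /=; rewrite /fK pisig subrr.
- by move=> w m /=; rewrite /fK addrC subrK.
Qed.

Lemma split_conc : ~ trivial_mod (robj X s) -> forall w x, sigma w (piY x) = x.
Proof.
move=> nt.
have cY : cocontinuous Y by exact: Yrep_cc.
have cK : cocontinuous K by exact: (Krep_cc fK_idem Xcc).
case: (proj2 Xind Y K cY cK bip) => [zY|zK].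
  exfalso; apply: nt => x.
  have := zY s ((fun _ => x, 0) : yobj X s s).
  by move/(congr1 (fun F => F.1 (refl s))).
move=> w x; have := zK w (kr fK_lin fK_idem x).
move/(congr1 val) => /= /eqP; rewrite /fK subr_eq0 => /eqP e.
by rewrite -e.
Qed.
End WithSigma.

Lemma split_at : ~ trivial_mod (robj X s) ->
  (forall w, ~ le w s -> ~ lt le s w -> trivial_mod (robj X w)) /\
  (forall w (q : le w s), (forall x, rmap X q x = 0 -> x = 0) /\
                          (forall x', exists x, rmap X q x = x')).
Proof.
move=> nt; have [sigma [sn sj]] := sigma_ex.
have hid := split_conc sn sj nt.
have ps := pisig sn sj.
have s0 : forall w, sigma w 0 = 0 by move=> w; exact: (lin0 (proj1 sn w)).
split.
- move=> w n1 n2 x; rewrite -(hid w x) (ytriv n1 n2 (piY x)); exact: s0.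
- move=> w q; split.
  + move=> x e; rewrite -(hid w x).
    have -> : piY x = 0.
      apply: yext => /=; last by apply: triv_fun => h; apply: (proj2 h); exact: antis (proj1 h) q.
      apply/funext => q' /=; by rewrite (piapp (fun q => rmap X q x) q' q) e.
    exact: s0.
  + move=> x'; exists (sigma w ((fun _ => x', 0) : yobj X s w)).
    have := congr1 (fun F => F.1 q) (ps w ((fun _ => x', 0) : yobj X s w)).
    by [].
Qed.
End Split.

Section TreeFacts.
Variables (V : Type) (le : V -> V -> Prop) (Hpo : poset_ax le).
Let refl := po_refl Hpo.
Let trans := po_trans Hpo.
Let antis := po_antisym Hpo.
Variable tot : forall u v w, le u v -> le w v -> le u w \/ le w u.
Variable dcc : ~ exists f : nat -> V, forall n, True /\ le (f n.+1) (f n) /\ f n.+1 <> f n.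

Lemma dcc_min (P : V -> Prop) : (exists x, P x) ->
  exists s, P s /\ forall x, P x -> le x s -> x = s.
Proof.
move=> [x0 Px0].
case: (pselect (exists s, P s /\ forall x, P x -> le x s -> x = s)) => // H.
exfalso; apply: dcc.
have step : forall s, exists x, P s -> P x /\ le x s /\ x <> s.
  move=> s; case: (pselect (P s)) => Ps; last by exists s.
  case: (pselect (exists x, P x /\ le x s /\ x <> s)) => [[x hx]|nx].
    by exists x.
  exfalso; apply: H; exists s; split=> // x Px xs.
  case: (pselect (x = s)) => // nxs; case: nx; by exists x.
have [ch hch] := choice step.
pose f n := iter n ch x0.
have Pf : forall n, P (f n) by elim=> [|n IH] //=; exact: (proj1 (hch _ IH)).
exists f => n; split=> //; exact: (proj2 (hch _ (Pf n))).
Qed.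

Lemma succ_ex d w : le d w -> ~ le w d ->
  exists s, nonlim le s /\ le s w /\ ~ le s d.
Proof.
move=> dw nwd.
have [s [[sw nsd] smin]] := dcc_min (P := fun x => le x w /\ ~ le x d) (ex_intro _ w (conj (refl w) nwd)).
exists s; split=> //; move=> D [_ Dch] [e De] [ub lub].
case: (pselect (D s)) => // nDs; exfalso; apply: nsd.
apply: lub => e' De'; case: (pselect (le e' d)) => // ne'.
have := smin e' (conj (trans (ub e' De') sw) ne') (ub e' De').
by move=> eq; case: nDs; rewrite -eq.
Qed.

Lemma notnonlim w : ~ nonlim le w ->
  exists D, is_chain le (fun _ => True) D /\ (exists e, D e) /\ is_lub le D w /\ ~ D w.
Proof.
move=> nn; case: (pselect (exists D, is_chain le (fun _ => True) D /\ (exists e, D e) /\ is_lub le D w /\ ~ D w)) => // H.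
exfalso; apply: nn => D Dc De Dl; case: (pselect (D w)) => // nD; case: H; by exists D.
Qed.

Lemma limC w d0 : ~ nonlim le w -> le d0 w -> d0 <> w ->
  is_chain le (fun _ => True) (fun c => nonlim le c /\ le c w /\ ~ le c d0) /\
  (exists c, nonlim le c /\ le c w /\ ~ le c d0) /\
  is_lub le (fun c => nonlim le c /\ le c w /\ ~ le c d0) w.
Proof.
move=> nn d0w nd0w.
have [D [[_ Dch] [[e De] [[ub lub] nDw]]]] := notnonlim nn.
have nwd0 : ~ le w d0 by move=> h; apply: nd0w; exact: antis d0w h.
split; [split=> // a b [_ [aw _]] [_ [bw _]]; exact: tot aw bw|split].
  have [s [ns [sw nsd]]] := succ_ex d0w nwd0; by exists s.
split; first by move=> c [_ [cw _]].
move=> b hb; apply: lub => d Dd.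
have dw := ub d Dd.
have ndw : d <> w by move=> eq; apply: nDw; rewrite -eq.
have [d' [dd' [d0d' [d'w nwd']]]] : exists d', le d d' /\ le d0 d' /\ le d' w /\ ~ le w d'.
  case: (tot dw d0w) => h.
    by exists d0; split=> //; split=> //; apply: refl.
  exists d; split; first exact: refl.
  split=> //; split=> // h'; apply: ndw; exact: antis dw h'.
have [s [ns [sw nsd']]] := succ_ex d'w nwd'.
have sC : nonlim le s /\ le s w /\ ~ le s d0.
  by split=> //; split=> // h; apply: nsd'; exact: trans h d0d'.
apply: trans (hb s sC).
case: (tot dw sw) => // h; exfalso; apply: nsd'; exact: trans h dd'.
Qed.

End TreeFacts.

Lemma zero_of_colim (R : pzRingType) (V : Type) (le : V -> V -> Prop) (Z : rep R le) C u :
  is_colim_cocone Z C u -> (forall c, C c -> trivial_mod (robj Z c)) -> trivial_mod (robj Z u).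
Proof.
move=> H tc y.
have [h [hl hc hu]] := H (robj Z u) (fun v _ _ => 0) (fun v _ => @lin_zero _ _ _) (fun _ _ _ _ _ _ => erefl).
have e1 := hu id (fun a x y => erefl) (fun v Cv p x => etrans (congr1 _ (tc v Cv x)) (lin0 (rmap_lin p))) y.
have e0 := hu (fun _ => 0) (@lin_zero _ _ _) (fun _ _ _ _ => erefl) y.
by rewrite e1 -e0.
Qed.

Lemma inj_of_ker (R : pzRingType) (A B : lmodType R) (f : A -> B) :
  is_lin f -> (forall x, f x = 0 -> x = 0) -> forall x y, f x = f y -> x = y.
Proof.
move=> hf hk x y e; apply/eqP; rewrite -subr_eq0; apply/eqP; apply: hk.
by rewrite (linB hf) e subrr.
Qed.

Lemma ntriv_ex (R : pzRingType) (M : lmodType R) : ~ trivial_mod M -> exists x : M, x <> 0.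
Proof.
move=> nt; case: (pselect (exists x : M, x <> 0)) => // H; exfalso; apply: nt => x.
case: (pselect (x = 0)) => // nx; case: H; by exists x.
Qed.

Lemma nat_comp (R : pzRingType) (V : Type) (le : V -> V -> Prop) (A B C : rep R le)
  (f : forall w, robj A w -> robj B w) (g : forall w, robj B w -> robj C w) :
  is_nat f -> is_nat g -> is_nat (fun w x => g w (f w x)).
Proof.
move=> [fl fn] [gl gn]; split; first by move=> w; exact: lin_comp.
by move=> v w p x; rewrite fn gn.
Qed.

Section EMap.
Variables (R : pzRingType) (V : Type) (le : V -> V -> Prop) (Hpo : poset_ax le) (u : V).
Definition emap (A B : lmodType R) (f : A -> B) w (y : le w u -> A) : le w u -> B :=
  fun q => f (y q).
Lemma emap_nat (A B : lmodType R) (f : A -> B) : is_lin f ->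
  is_nat (X := e_star Hpo u A) (Y := e_star Hpo u B) (emap f).
Proof.
move=> hf; split; last by [].
by move=> w a x y; apply/funext => q; rewrite /emap /= hf.
Qed.
End EMap.

Theorem theorem4p2 (R : pzRingType) (V : Type) (le : V -> V -> Prop)
    (Hpo : poset_ax le) (T : V -> Prop) (HT : is_completion le T)
    (X : rep R le) (Xcc : cocontinuous X) (Xinj : injective_obj X)
    (Xind : indecomposable_obj X) :
  exists (v : V) (E : lmodType R),
    [/\ injective_module E, indecomposable_module E & rep_iso X (e_star Hpo v E)].
Proof.
case: HT => [[_ _ trT comp] _].
have refl := po_refl Hpo; have trans := po_trans Hpo; have antis := po_antisym Hpo.
have tot : forall u v w, le u v -> le w v -> le u w \/ le w u.
  by move=> u v w h1 h2; exact: (tree_down_total trT I I I h1 h2).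
have dcc : ~ exists f : nat -> V, forall n, True /\ le (f n.+1) (f n) /\ f n.+1 <> f n.
  exact: (tree_dcc trT).
pose S c := nonlim le c /\ ~ trivial_mod (robj X c).
have spl := fun c (Sc : S c) => split_at Hpo tot Xcc Xinj Xind (proj1 Sc) (proj2 Sc).
have Schain : is_chain le (fun _ => True) S.
  split=> // a b Sa Sb; case: (pselect (le b a)) => hba; first by right.
  case: (pselect (lt le a b)) => hab; first by left; exact: proj1 hab.
  by exfalso; apply: (proj2 Sb); exact: (proj1 (spl a Sa) b hba hab).
have Snon : exists s, S s.
  have [w nw] : exists w, ~ trivial_mod (robj X w).
    case: (pselect (exists w, ~ trivial_mod (robj X w))) => // H; exfalso.
    apply: (proj1 Xind) => w; case: (pselect (trivial_mod (robj X w))) => // nt.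
    by case: H; exists w.
  case: (pselect (nonlim le w)) => nl; first by exists w.
  have [D [_ [[d0 Dd0] [[ub _] nDw]]]] := notnonlim nl.
  have d0w := ub d0 Dd0.
  have nd0w : d0 <> w by move=> e; apply: nDw; rewrite -e.
  have [Cch [Cne Cl]] := limC Hpo tot dcc nl d0w nd0w.
  case: (pselect (exists c, (nonlim le c /\ le c w /\ ~ le c d0) /\ ~ trivial_mod (robj X c))).
    by move=> [c [[nc _] ntc]]; exists c.
  move=> H; exfalso; apply: nw.
  apply: (zero_of_colim (Xcc _ _ Cch Cne Cl)) => c Cc.
  case: (pselect (trivial_mod (robj X c))) => // ntc; case: H; by exists c.
have [u [uub ulub]] := comp S Schain.
have inj_su : forall s0, S s0 -> forall (p : le s0 u) x, rmap X p x = 0 -> x = 0.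
  move=> s0 Ss0 p x e.
  pose C := fun s => S s /\ le s0 s.
  have Cch : is_chain le (fun _ => True) C.
    by split=> // a b [Sa _] [Sb _]; exact: (proj2 Schain) a b Sa Sb.
  have Cl : is_lub le C u := final_lub Hpo Schain Ss0 (conj uub ulub).
  pose g s (Cs : C s) (y : robj X s) : robj X s0 :=
    proj1_sig (cid (proj2 ((proj2 (spl s (proj1 Cs))) s0 (proj2 Cs)) y)).
  have gP : forall s (Cs : C s) y, rmap X (proj2 Cs) (g s Cs y) = y.
    by move=> s Cs y; rewrite /g; case: cid.
  have gI : forall s (Cs : C s) x1 x2, rmap X (proj2 Cs) x1 = rmap X (proj2 Cs) x2 -> x1 = x2.
    move=> s Cs; apply: inj_of_ker; first exact: rmap_lin.
    exact: (proj1 ((proj2 (spl s (proj1 Cs))) s0 (proj2 Cs))).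
  have gl : forall s (Cs : C s), is_lin (g s Cs).
    move=> s Cs a y y'; apply: (gI s Cs).
    by rewrite (rmap_lin (proj2 Cs)) !gP.
  have gc : forall v w (Cv : C v) (Cw : C w) (q : le v w) y, g w Cw (rmap X q y) = g v Cv y.
    move=> v w Cv Cw q y; apply: (gI w Cw).
    by rewrite gP (rmap_comp (proj2 Cv) q (proj2 Cw)) gP.
  have [h [hl hc _]] := Xcc C u Cch (ex_intro _ s0 (conj Ss0 (refl s0))) Cl (robj X s0) g gl gc.
  have g0 : g s0 (conj Ss0 (refl s0)) x = x.
    apply: (gI s0 (conj Ss0 (refl s0))); by rewrite gP rmap_id.
  by rewrite -g0 -(hc s0 (conj Ss0 (refl s0)) p x) e (lin0 hl).
pose E := robj X u.
pose B := e_star Hpo u E.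
pose eta w (x : robj X w) : robj B w := fun q : le w u => rmap X q x.
have eta_nat : is_nat (X := X) (Y := B) eta.
  split.
    by move=> w a x y; apply/funext => q; rewrite /eta /= (rmap_lin q).
  move=> v w p x; apply/funext => q; rewrite /eta /= /estar_map.
  apply/esym; exact: rmap_comp.
have eta_inj : forall w x, eta w x = 0 -> x = 0.
  move=> w x e; case: (pselect (le w u)) => q.
  - have rq : rmap X q x = 0 := congr1 (fun F => F q) e.
    case: (pselect (exists s0, S s0 /\ le w s0)) => [[s0 [Ss0 ws0]]|H].
      have p := uub s0 Ss0.
      apply: (proj1 ((proj2 (spl s0 Ss0)) w ws0)); apply: (inj_su s0 Ss0 p).
      by rewrite -(rmap_comp ws0 p q).
    have uw : le u w.
      apply: ulub => s Ss; case: (tot _ _ _ (uub s Ss) q) => // h.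
      by case: H; exists s.
    have ewu : w = u := antis _ _ q uw.
    subst w; by rewrite rmap_id in rq.
  - suff: trivial_mod (robj X w) by apply.
    case: (pselect (nonlim le w)) => nl.
      move=> y; case: (pselect (trivial_mod (robj X w))) => [t|nt]; first exact: t.
      by exfalso; apply: q; exact: uub w (conj nl nt).
    have [D [_ [_ [[ub lub] nDw]]]] := notnonlim nl.
    have [d0 [Dd0 nd0u]] : exists d0, D d0 /\ ~ le d0 u.
      case: (pselect (exists d0, D d0 /\ ~ le d0 u)) => // H; exfalso; apply: q.
      apply: lub => d Dd; case: (pselect (le d u)) => // nd; case: H; by exists d.
    have d0w := ub d0 Dd0.
    have nd0w : d0 <> w by move=> e'; apply: nDw; rewrite -e'.
    have [Cch [Cne Cl]] := limC Hpo tot dcc nl d0w nd0w.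
    apply: (zero_of_colim (Xcc _ _ Cch Cne Cl)) => c [nc [cw ncd0]].
    case: (pselect (trivial_mod (robj X c))) => // ntc; exfalso.
    have cu := uub c (conj nc ntc).
    case: (tot _ _ _ cw d0w) => // h; apply: nd0u; exact: trans _ _ _ h cu.
have eta_lin : forall w, is_lin (eta w) := proj1 eta_nat.
have eta_mono : rep_mono (A := X) (B := B) eta.
  move=> Z g h _ _ _ e v z.
  have : eta v (g v z - h v z) = 0 by rewrite (linB (eta_lin v)) e subrr.
  by move/eta_inj/eqP; rewrite subr_eq0 => /eqP.
have id_nat : is_nat (X := X) (Y := X) (fun w x => x).
  by split => // w a x y.
have [rho [rn re]] := Xinj X B eta (fun w x => x) Xcc (@estar_cc _ _ _ Hpo u E) eta_nat eta_mono id_nat.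
have rho_lin : forall w, is_lin (rho w) := proj1 rn.
have etau : forall x : E, eta u x = fun _ => x.
  by move=> x; apply/funext => q; rewrite /eta rmap_id.
have rhoc : forall x : E, rho u (fun _ => x) = x.
  by move=> x; rewrite -etau re.
have etarho : forall w y, eta w (rho w y) = y.
  move=> w y; apply/funext => q; rewrite /eta.
  rewrite -(proj2 rn w u q y) /= /estar_map.
  have -> : (fun q0 : le u u => y (po_trans Hpo q q0)) = fun _ => y q.
    by apply/funext => q'; exact: piapp.
  exact: rhoc.
exists u, E; split.
-
  move=> A0 B0 f g hf finj hg.
  have Fn := emap_nat Hpo u hf.
  have Gn : is_nat (X := e_star Hpo u A0) (Y := X) (fun w y => rho w (emap g y)).
    exact: nat_comp (emap_nat Hpo u hg) rn.
  have Fm : rep_mono (A := e_star Hpo u A0) (B := e_star Hpo u B0) (emap f).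
    move=> Z g1 h1 _ _ _ e v z; apply/funext => q.
    by apply: finj; exact: (congr1 (fun F => F q) (e v z)).
  have [H [Hn He]] := Xinj (e_star Hpo u A0) (e_star Hpo u B0) (emap f)
     (fun w y => rho w (emap g y)) (@estar_cc _ _ _ Hpo u A0) (@estar_cc _ _ _ Hpo u B0) Fn Fm Gn.
  exists (fun b => H u (fun _ => b)); split.
    by move=> a x y; rewrite -(proj1 Hn u).
  move=> x; rewrite -[X in H u X]/(emap f (fun _ : le u u => x)) He.
  exact: rhoc.
-
  split.
    move=> tE; apply: (proj1 Xind) => w x; apply: (eta_inj w x).
    apply/funext => q; exact: tE.
  move=> M1 M2 [i1 [i2 [p1 [p2 [[hi1 hi2 hp1 hp2] [e11 e22 e12 e21 esum]]]]]].
  have zM : forall (M : lmodType R), zero_rep (e_star Hpo u M) -> trivial_mod M.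
    by move=> M zr m; exact: (congr1 (fun F => F (refl u)) (zr u (fun _ => m))).
  have bp : rep_biproduct X (e_star Hpo u M1) (e_star Hpo u M2).
    exists (fun w y => rho w (emap i1 y)), (fun w y => rho w (emap i2 y)),
      (fun w x => emap p1 (eta w x)), (fun w x => emap p2 (eta w x)).
    split; split.
    + exact: nat_comp (emap_nat Hpo u hi1) rn.
    + exact: nat_comp (emap_nat Hpo u hi2) rn.
    + exact: nat_comp eta_nat (emap_nat Hpo u hp1).
    + exact: nat_comp eta_nat (emap_nat Hpo u hp2).
    + by move=> w y; rewrite etarho; apply/funext => q; rewrite /emap e11.
    + by move=> w y; rewrite etarho; apply/funext => q; rewrite /emap e22.
    + by move=> w y; rewrite etarho; apply/funext => q; rewrite /emap e12.
    + by move=> w y; rewrite etarho; apply/funext => q; rewrite /emap e21.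
    + move=> w m; rewrite -(linD (rho_lin w)).
      have -> : emap i1 (emap p1 (eta w m)) + emap i2 (emap p2 (eta w m)) = eta w m.
        by apply/funext => q; exact: (esum (eta w m q)).
      exact: re.
  case: (proj2 Xind _ _ (@estar_cc _ _ _ Hpo u M1) (@estar_cc _ _ _ Hpo u M2) bp) => zr.
    by left; exact: zM.
  by right; exact: zM.
- by exists eta, rho; split.
Qed.
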